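(* Let $f(a)=\alpha_d a^d+\dots+\alpha_1 a+\alpha_0$ be a real polynomial of degree $d\ge 1$ (so $\alpha_d\neq 0$), and let $S$ be the set of real roots of $f$ lying in the open interval $(0,1)$. Then there is a $3$-person game in which the first player has two pure strategies and the second and third players each have $\lceil d/2\rceil+1$ pure strategies, such that, letting $E$ denote the set of totally mixed Nash equilibria of this game, the projection of $E$ onto the probability that the first player plays her first pure strategy equals $S$, and $\#E=\#S$.
   Context: A finite normal form game consists of players $I=\{1,\dots,N\}$, finite pure strategy sets $S_i=\{s_{i0},\dots,s_{id_i}\}$, and payoffs $u_i:\prod_i S_i\to\mathbb{R}$. A mixed strategy of player $i$ is a probability vector $\sigma_i$ on $S_i$; expected payoffs are multilinear: $u_i(\sigma)=\sum_{s}u_i(s)\prod_k\sigma_k(s_k)$, and $u_i(s_{ij},\sigma_{-i})$ denotes player $i$'s expected payoff when $i$ plays $s_{ij}$ and the others play according to $\sigma$. A profile $\sigma$ is a totally mixed Nash equilibrium if $0<\sigma_i(s_{ij})<1$ for all $i,j$ and $u_i(s_{ij},\sigma_{-i})=u_i(s_{i0},\sigma_{-i})$ for all $i$ and $j=1,\dots,d_i$. *)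

(* Defs.v *)
From HB Require Import structures.
From mathcomp Require Import all_boot all_order all_algebra.
From mathcomp Require Import reals.
Set Implicit Arguments. Unset Strict Implicit. Unset Printing Implicit Defensive.
Import Order.TTheory GRing.Theory Num.Theory.
Local Open Scope ring_scope.

Section Game3.
Variables (R : numDomainType) (n1 n2 n3 : nat).

Definition payoff3 := 'I_n1 -> 'I_n2 -> 'I_n3 -> R.

Definition profile3 := ({ffun 'I_n1 -> R} * {ffun 'I_n2 -> R} * {ffun 'I_n3 -> R})%type.

Definition is_mixed (n : nat) (s : {ffun 'I_n -> R}) : Prop :=
  (forall j, 0 <= s j) /\ \sum_(j < n) s j = 1.

Definition pure (n : nat) (j : 'I_n) : {ffun 'I_n -> R} := [ffun x => (x == j)%:R].

Definition exp_payoff (u : payoff3) (s1 : {ffun 'I_n1 -> R})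
  (s2 : {ffun 'I_n2 -> R}) (s3 : {ffun 'I_n3 -> R}) : R :=
  \sum_(a < n1) \sum_(b < n2) \sum_(c < n3) u a b c * s1 a * s2 b * s3 c.

Definition totally_mixed (n : nat) (s : {ffun 'I_n -> R}) : Prop :=
  forall j, 0 < s j < 1.

Definition totally_mixed_NE (u1 u2 u3 : payoff3) (sg : profile3) : Prop :=
  let: (s1, s2, s3) := sg in
  [/\ is_mixed s1, is_mixed s2, is_mixed s3,
      totally_mixed s1 /\ totally_mixed s2 /\ totally_mixed s3 &
      [/\ forall (j0 j : 'I_n1), (j0 : nat) = 0%N ->
            exp_payoff u1 (pure j) s2 s3 = exp_payoff u1 (pure j0) s2 s3,
          forall (j0 j : 'I_n2), (j0 : nat) = 0%N ->
            exp_payoff u2 s1 (pure j) s3 = exp_payoff u2 s1 (pure j0) s3 &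
          forall (j0 j : 'I_n3), (j0 : nat) = 0%N ->
            exp_payoff u3 s1 s2 (pure j) = exp_payoff u3 s1 s2 (pure j0)]].
End Game3.

Definition has_card (T : eqType) (P : T -> Prop) (n : nat) : Prop :=
  exists s : seq T, [/\ uniq s, forall x, P x <-> x \in s & size s = n].

(* Main.v *)
Require Import Defs.
From HB Require Import structures.
From mathcomp Require Import all_boot all_order all_algebra.
From mathcomp Require Import reals.
From mathcomp Require Import ring lra.
From Stdlib Require Import Classical.
Import Order.TTheory GRing.Theory Num.Theory.
Local Open Scope ring_scope.

Lemma sum_delta (R : realType) n (i : 'I_n) (F : 'I_n -> R) :
  \sum_(c < n) (c == i)%:R * F c = F i.
Proof.
rewrite (bigD1 i) //= eqxx mul1r big1 ?addr0 // => c /negbTE ->.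
by rewrite mul0r.
Qed.

Lemma L1 (R : realType) n1 n2 n3 (u : payoff3 R n1 n2 n3) j s2 s3 :
  exp_payoff u (pure R j) s2 s3 = \sum_b \sum_c u j b c * s2 b * s3 c.
Proof.
rewrite /exp_payoff (bigD1 j) //= [X in _ + X]big1 ?addr0; last first.
  move=> a /negbTE Ha; apply: big1 => b _; apply: big1 => c _.
  by rewrite /pure ffunE Ha mulr0 !mul0r.
by apply: eq_bigr => b _; apply: eq_bigr => c _; rewrite /pure ffunE eqxx mulr1.
Qed.

Lemma L2 (R : realType) n1 n2 n3 (u : payoff3 R n1 n2 n3) j s1 s3 :
  exp_payoff u s1 (pure R j) s3 = \sum_a \sum_c u a j c * s1 a * s3 c.
Proof.
rewrite /exp_payoff; apply: eq_bigr => a _.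
rewrite (bigD1 j) //= [X in _ + X]big1 ?addr0; last first.
  move=> b /negbTE Hb; apply: big1 => c _.
  by rewrite /pure ffunE Hb mulr0 !mul0r.
by apply: eq_bigr => c _; rewrite /pure ffunE eqxx mulr1.
Qed.

Lemma L3 (R : realType) n1 n2 n3 (u : payoff3 R n1 n2 n3) j s1 s2 :
  exp_payoff u s1 s2 (pure R j) = \sum_a \sum_b u a b j * s1 a * s2 b.
Proof.
rewrite /exp_payoff; apply: eq_bigr => a _; apply: eq_bigr => b _.
rewrite (bigD1 j) //= [X in _ + X]big1 ?addr0; last first.
  by move=> c /negbTE Hc; rewrite /pure ffunE Hc mulr0.
by rewrite /pure ffunE eqxx mulr1.
Qed.

Lemma sum2 (R : realType) (F : 'I_2 -> R) : \sum_(a < 2) F a = F ord0 + F ord_max.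
Proof.
rewrite !big_ord_recl big_ord0 addr0; congr (_ + F _); exact: val_inj.
Qed.

Lemma ord2_cases (a : 'I_2) : a = ord0 \/ a = ord_max.
Proof.
case: a => [[|[|a]]] Ha; [left|right|by []]; exact: val_inj.
Qed.

Definition Zs {R : realType} k (x : R) := \sum_(c < k.+1) x ^+ c.
Definition sig {R : realType} k (x : R) : {ffun 'I_k.+1 -> R} :=
  [ffun c : 'I_k.+1 => x ^+ c / Zs k x].
Definition sig1 {R : realType} (x : R) : {ffun 'I_2 -> R} :=
  [ffun a : 'I_2 => if a == ord0 then x else 1 - x].
Definition u2 (R : realType) k : payoff3 R 2 k.+1 k.+1 := fun a j c =>
  if j == ord0 then 0 else (c == j)%:R - (a == ord0)%:R * (c == inord j.-1)%:R.
Definition u3 (R : realType) k : payoff3 R 2 k.+1 k.+1 := fun a b c => u2 R k a c b.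
Definition g {R : realType} k (f : {poly R}) (b c : 'I_k.+1) : R :=
  if c == ord0 then f`_b else if b == ord_max then f`_(k + c) else 0.
Definition u1 {R : realType} k f : payoff3 R 2 k.+1 k.+1 := fun a b c =>
  if a == ord0 then 0 else g k f b c.

Lemma K2 (R : realType) k (s1 : {ffun 'I_2 -> R}) (t : {ffun 'I_k.+1 -> R}) j :
  \sum_(a < 2) s1 a = 1 ->
  \sum_(a < 2) \sum_(c < k.+1) u2 R k a j c * s1 a * t c =
  if j == ord0 then 0 else t j - s1 ord0 * t (inord j.-1).
Proof.
move=> Hs; case: eqP => Hj.
  by apply: big1 => a _; apply: big1 => c _; rewrite /u2 Hj eqxx !mul0r.
have E : forall a, \sum_(c < k.+1) u2 R k a j c * s1 a * t c =
   s1 a * t j - (a == ord0)%:R * s1 a * t (inord j.-1).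
  move=> a.
  rewrite (eq_bigr (fun c => (c == j)%:R * (s1 a * t c) -
     (c == inord j.-1)%:R * ((a == ord0)%:R * s1 a * t c))); last first.
    by move=> c _; rewrite /u2; case: eqP => // _; ring.
  by rewrite sumrB !sum_delta.
rewrite (eq_bigr _ (fun a _ => E a)) sum2 !sum2 in Hs *.
rewrite eqxx /=.
have -> : s1 ord_max = 1 - s1 ord0 by rewrite -Hs; ring.
ring.
Qed.

Lemma Zs_gt0 (R : realType) k (x : R) : 0 <= x -> 0 < Zs k x.
Proof.
move=> hx; rewrite /Zs big_ord_recl expr0.
have : 0 <= \sum_(i < k) x ^+ (lift ord0 i) by apply: sumr_ge0 => i _; exact: exprn_ge0.
lra.
Qed.

Lemma sig_sum (R : realType) k (x : R) : 0 <= x -> \sum_(c < k.+1) sig k x c = 1.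
Proof.
move=> hx; rewrite (eq_bigr (fun c : 'I_k.+1 => x ^+ c * (Zs k x)^-1)); last by move=> c _; rewrite ffunE.
by rewrite -mulr_suml divff // gt_eqF // Zs_gt0.
Qed.

Lemma sig_rec (R : realType) k (x : R) (j : 'I_k.+1) : j != ord0 ->
  sig k x j = x * sig k x (inord j.-1).
Proof.
move=> hj; rewrite !ffunE inordK; last by rewrite (leq_ltn_trans (leq_pred _)).
have : (0 < j)%N by rewrite lt0n.
case: (nat_of_ord j) => [//|n] _ /=.
by rewrite exprS mulrA.
Qed.

Lemma geo (R : realType) k (x : R) (t : {ffun 'I_k.+1 -> R}) : 0 <= x ->
  \sum_(c < k.+1) t c = 1 ->
  (forall j : 'I_k.+1, j != ord0 -> t j = x * t (inord j.-1)) ->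
  t = sig k x.
Proof.
move=> hx hs hr.
have H : forall n, (n < k.+1)%N -> t (inord n) = x ^+ n * t ord0.
  elim=> [|n IH] hn.
    by rewrite expr0 mul1r; congr (t _); apply: val_inj; rewrite /= inordK.
  rewrite hr; last by rewrite -val_eqE /= inordK.
  rewrite inordK //= IH ?(ltnW hn) // exprS mulrA //.
have H2 : forall c : 'I_k.+1, t c = x ^+ c * t ord0.
  by move=> c; rewrite -H // inord_val.
have hz : Zs k x * t ord0 = 1.
  by rewrite -hs /Zs mulr_suml; apply: eq_bigr => c _; rewrite [RHS]H2.
have hz0 : Zs k x != 0 by rewrite gt_eqF // Zs_gt0.
apply/ffunP => c; rewrite ffunE H2.
congr (_ * _); rewrite -[t ord0]mul1r -(mulVf hz0) -mulrA hz mulr1 //.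
Qed.

Lemma sig_bounds (R : realType) k (x : R) (c : 'I_k.+1) : (1 <= k)%N -> 0 < x < 1 ->
  0 < sig k x c < 1.
Proof.
move=> hk /andP [h0 h1]; rewrite ffunE.
have hZ : 1 + x <= Zs k x.
  case: k hk c => [//|k] _ c.
  rewrite /Zs !big_ord_recl expr0 /= expr1.
  have : 0 <= \sum_(i < k) x ^+ (lift ord0 (lift ord0 i)).
    by apply: sumr_ge0 => i _; apply: exprn_ge0; lra.
  lra.
have hxc : x ^+ c <= 1 by apply: exprn_ile1; lra.
have hxc0 : 0 < x ^+ c by apply: exprn_gt0.
have hZ0 : 0 < Zs k x by lra.
apply/andP; split; first by apply: divr_gt0.
rewrite ltr_pdivrMr // mul1r; lra.
Qed.

Lemma gsum (R : realType) k (f : {poly R}) (x : R) : (size f <= k.+1 + k)%N ->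
  \sum_(b < k.+1) \sum_(c < k.+1) g k f b c * (x ^+ b * x ^+ c) = f.[x].
Proof.
move=> hs; rewrite (horner_coef_wide x hs) big_split_ord /=.
rewrite exchange_big big_ord_recl /=.
congr (_ + _).
  by apply: eq_bigr => b _; rewrite /g eqxx expr0 mulr1.
apply: eq_bigr => i _.
rewrite big_ord_recr /= big1 ?add0r; last first.
  move=> b _; rewrite /g.
  have -> : (lift ord0 i == ord0) = false by [].
  have -> : (widen_ord (leqnSn k) b == ord_max) = false.
    by apply/negbTE; rewrite -val_eqE /= neq_ltn ltn_ord.
  by rewrite mul0r.
rewrite /g.
have -> : (lift ord0 i == ord0) = false by [].
rewrite eqxx /= -exprD /bump /= add1n addSnnS.
by [].
Qed.

Lemma P1 (R : realType) k (f : {poly R}) (x : R) : (size f <= k.+1 + k)%N ->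
  \sum_(b < k.+1) \sum_(c < k.+1) g k f b c * sig k x b * sig k x c
  = f.[x] * ((Zs k x)^-1 * (Zs k x)^-1).
Proof.
move=> hs; rewrite -(@gsum _ _ _ x hs) mulr_suml; apply: eq_bigr => b _.
rewrite mulr_suml; apply: eq_bigr => c _; rewrite !ffunE; ring.
Qed.

Lemma roots01 (R : realType) (p : {poly R}) : p != 0 ->
  exists s : seq R, uniq s /\ forall x, (root p x /\ 0 < x < 1) <-> x \in s.
Proof.
move: {2}(size p) (leqnn (size p)) => n.
elim: n p => [|n IH] p Hs Hp.
  by move: Hp; rewrite -size_poly_eq0; move: Hs; rewrite leqn0 => /eqP ->.
case: (classic (exists x, root p x /\ 0 < x < 1)) => [[r [Hr Hr01]]|Hno]; last first.
  exists [::]; split => // x; split => // H; exfalso; apply: Hno; by exists x.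
case/factor_theorem: Hr => q Hq.
have Hq0 : q != 0 by apply: contraNneq Hp => q0; rewrite Hq q0 mul0r.
have Hsq : (size q <= n)%N.
  move: Hs; rewrite Hq size_Mmonic ?monicXsubC // size_XsubC addn2 /=.
  by [].
have [s [Hu Hs']] := IH q Hsq Hq0.
exists (undup (r :: s)); split; first exact: undup_uniq.
move=> x; rewrite mem_undup in_cons Hq rootM root_XsubC.
split.
  case=> /orP [H|H] Hx; apply/orP; [right|left] => //.
  by apply/Hs'.
case/orP => [/eqP ->|/Hs' [H Hx]]; split => //; rewrite ?eqxx ?orbT //.
by rewrite H.
Qed.

Definition prof {R : realType} k (x : R) : profile3 R 2 k.+1 k.+1 :=
  (sig1 x, sig k x, sig k x).

Lemma n10 : (ord_max == ord0 :> 'I_2) = false. Proof. by []. Qed.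

Lemma sig1_sum (R : realType) (x : R) : \sum_(a < 2) sig1 x a = 1.
Proof. by rewrite sum2 !ffunE eqxx n10; ring. Qed.

Lemma NE_iff (R : realType) k (f : {poly R}) (sg : profile3 R 2 k.+1 k.+1) :
  (1 <= k)%N -> (size f <= k.+1 + k)%N ->
  totally_mixed_NE (u1 k f) (u2 R k) (u3 R k) sg <->
  exists x, (root f x /\ 0 < x < 1) /\ sg = prof k x.
Proof.
move=> hk hs; split.
  case: sg => [[s1 s2 s3]] [m1 m2 m3 [t1 [t2 t3]] [h1 h2 h3]].
  set x := s1 ord0.
  have hx : 0 < x < 1 := t1 ord0.
  have hsum1 : \sum_(a < 2) s1 a = 1 := m1.2.
  have e1 : s1 = sig1 x.
    apply/ffunP => a; rewrite ffunE; case: (ord2_cases a) => ->; first by rewrite eqxx.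
    rewrite n10; move: hsum1; rewrite sum2 -/x => H; rewrite -H; ring.
  have e3 : s3 = sig k x.
    apply: geo; [lra | exact: m3.2 | move=> j hj].
    have := h2 ord0 j erefl; rewrite !L2 !K2 // eqxx (negbTE hj).
    by move=> H; apply/eqP; rewrite -subr_eq0 -H.
  have e2 : s2 = sig k x.
    apply: geo; [lra | exact: m2.2 | move=> j hj].
    have := h3 ord0 j erefl; rewrite !L3 /u3 !K2 // eqxx (negbTE hj).
    by move=> H; apply/eqP; rewrite -subr_eq0 -H.
  move: h1 => /(_ ord0 ord_max erefl); rewrite e2 e3 !L1 /u1 eqxx n10 P1 //.
  have -> : \sum_(b < k.+1) \sum_(c < k.+1) 0 * sig k x b * sig k x c = 0 :> R.
    by apply: big1 => b _; apply: big1 => c _; rewrite !mul0r.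
  have hZ : Zs k x != 0 by rewrite gt_eqF // Zs_gt0 //; lra.
  move/eqP; rewrite !mulf_eq0 invr_eq0 (negbTE hZ) !orbF => hr.
  exists x; split; first by split.
  by rewrite /prof -e1.
move=> [x [[hr hx] ->]].
have hx0 : 0 <= x by lra.
split.
- split; last exact: sig1_sum.
  by move=> j; rewrite ffunE; case: ifP => _; lra.
- split; last exact: sig_sum.
  by move=> j; have := @sig_bounds _ _ _ j hk hx; lra.
- split; last exact: sig_sum.
  by move=> j; have := @sig_bounds _ _ _ j hk hx; lra.
- split; last by split => j; exact: (@sig_bounds _ _ _ j hk hx).
  by move=> j; rewrite ffunE; case: ifP => _; lra.
- split.
  + move=> j0 j h0; have -> : j0 = ord0 by apply: val_inj.
    case: (ord2_cases j) => -> //.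
    rewrite !L1 /u1 eqxx n10 P1 // (eqP hr) mul0r.
    by symmetry; apply: big1 => b _; apply: big1 => c _; rewrite !mul0r.
  + move=> j0 j h0; have -> : j0 = ord0 by apply: val_inj.
    rewrite !L2 !K2 ?sig1_sum // eqxx; case: eqP => // /eqP hj.
    by rewrite [sig1 x ord0]ffunE eqxx -sig_rec // subrr.
  + move=> j0 j h0; have -> : j0 = ord0 by apply: val_inj.
    rewrite !L3 /u3 !K2 ?sig1_sum // eqxx; case: eqP => // /eqP hj.
    by rewrite [sig1 x ord0]ffunE eqxx -sig_rec // subrr.
Qed.

From mathcomp Require Import zify.

Theorem theorem3 (R : realType) (d : nat) (f : {poly R}) :
  (1 <= d)%N -> size f = d.+1 ->
  exists (u1 u2 u3 : payoff3 R 2 (uphalf d).+1 (uphalf d).+1),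
    (forall x : R,
        (exists sg : profile3 R 2 (uphalf d).+1 (uphalf d).+1,
            totally_mixed_NE u1 u2 u3 sg /\ sg.1.1 ord0 = x)
        <-> (root f x /\ 0 < x < 1))
    /\ exists n : nat,
        has_card (totally_mixed_NE u1 u2 u3) n
        /\ has_card (fun x : R => root f x /\ 0 < x < 1) n.
Proof.
move=> hd hsz.
have hk : (1 <= uphalf d)%N by rewrite uphalf_gt0.
have hs : (size f <= (uphalf d).+1 + uphalf d)%N by rewrite hsz; lia.
exists (u1 (uphalf d) f), (u2 R _), (u3 R _); split.
  move=> x; split.
    case=> sg [hne hx]; have [y [hy E]] := (@NE_iff _ _ _ sg hk hs).1 hne.
    by move: hx; rewrite E /= ffunE eqxx => <-.
  move=> hx; exists (prof _ x); split; last by rewrite /= ffunE eqxx.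
  by apply/(@NE_iff _ _ _ (prof _ x) hk hs); exists x.
have f0 : f != 0 by rewrite -size_poly_eq0 hsz.
have [s [hu hs']] := @roots01 _ _ f0.
exists (size s); split; last by exists s.
exists (map (prof (uphalf d)) s); split.
- rewrite map_inj_uniq // => x y E.
  have := congr1 (fun p : profile3 R 2 (uphalf d).+1 (uphalf d).+1 => p.1.1 ord0) E.
  by rewrite /= !ffunE eqxx.
- move=> sg; rewrite (@NE_iff _ _ _ sg hk hs); split.
    by case=> x [hx ->]; apply: map_f; apply/hs'.
  by case/mapP => x hx ->; exists x; split => //; apply/hs'.
- by rewrite size_map.
Qed.
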